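(* Let $\frac{4}{3}\le p\le\frac{\log 3}{\log 2}$. The function $L(\alpha)=1+2\sin^p(\frac{\alpha}{2})+\cos^p\alpha$ on $\alpha\in[0,\frac{\pi}{3}]$ attains its minimum at the endpoints of the interval. In particular $L(\alpha)\ge 2$ for all $\alpha\in[0,\frac{\pi}{3}]$. *)

(* Defs.v *)
From Stdlib Require Import Reals.
Open Scope R_scope.

(* Real power x^p for x >= 0 and p > 0, with the convention 0^p = 0.
   (Stdlib's Rpower 0 p = exp (p * ln 0) = 1, which is wrong at 0.) *)
Definition rpow (x p : R) : R :=
  if Rle_dec x 0 then 0 else Rpower x p.

Definition Lfun (p a : R) : R :=
  1 + 2 * rpow (sin (a / 2)) p + rpow (cos a) p.

(* Main.v *)
Require Import Defs.
From Stdlib Require Import Reals Lra.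
From Coquelicot Require Import Coquelicot.
Open Scope R_scope.


Lemma mono_le (f df : R -> R) a b : a <= b ->
  (forall x, a < x < b -> is_derive f x (df x)) ->
  (forall x, a <= x <= b -> continuity_pt f x) ->
  (forall x, a < x < b -> 0 <= df x) -> f a <= f b.
Proof.
intros hab hd hc hs.
destruct (MVT_gen f a b (fun x => Rmax 0 (df x))) as [c [hc1 hc2]].
- rewrite Rmin_left, Rmax_right by lra. intros x hx.
  rewrite Rmax_right by (apply hs; lra). apply hd; lra.
- rewrite Rmin_left, Rmax_right by lra. exact hc.
- assert (0 <= Rmax 0 (df c)) by apply Rmax_l. nra.
Qed.

Lemma mono_ge (f df : R -> R) a b : a <= b ->
  (forall x, a < x < b -> is_derive f x (df x)) ->
  (forall x, a <= x <= b -> continuity_pt f x) ->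
  (forall x, a < x < b -> df x <= 0) -> f b <= f a.
Proof.
intros hab hd hc hs.
destruct (MVT_gen f a b (fun x => Rmin 0 (df x))) as [c [hc1 hc2]].
- rewrite Rmin_left, Rmax_right by lra. intros x hx.
  rewrite Rmin_right by (apply hs; lra). apply hd; lra.
- rewrite Rmin_left, Rmax_right by lra. exact hc.
- assert (Rmin 0 (df c) <= 0) by apply Rmin_l. nra.
Qed.

Definition Gx p s := 2 * exp (p * ln s) + exp (p * ln (1 - 2 * s^2)).
Definition Gd p s := 2 * p * exp (p * ln s) / s - 4 * p * s * exp (p * ln (1 - 2 * s^2)) / (1 - 2 * s^2).
Definition psi p s := exp ((2 - p) * ln s + (p - 1) * ln (1 - 2 * s^2)).
Definition psid p s := psi p s * ((2 - p) / s - 4 * (p - 1) * s / (1 - 2 * s^2)).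

Lemma dG p x : 0 < x -> 0 < 1 - 2 * x^2 -> is_derive (Gx p) x (Gd p x).
Proof. intros h1 h2. unfold Gx, Gd. auto_derive.
- split; [lra|split; [nra|exact I]].
- replace (1 + - (2 * (x * (x * 1)))) with (1 - 2*x^2) by ring.
  field. lra.
Qed.

Lemma dpsi p x : 0 < x -> 0 < 1 - 2 * x^2 -> is_derive (psi p) x (psid p x).
Proof. intros h1 h2. unfold psid, psi. auto_derive.
- split; [lra|split; [nra|exact I]].
- replace (1 + - (2 * (x * (x * 1)))) with (1 - 2*x^2) by ring.
  field. lra.
Qed.

Lemma psi_id p x : 0 < x -> 0 < 1 - 2 * x^2 ->
  psi p x * exp (p * ln x) * (1 - 2 * x^2) = x^2 * exp (p * ln (1 - 2 * x^2)).
Proof. intros h1 h2. unfold psi.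
rewrite <- (exp_ln (1 - 2*x^2)) at 2 by lra.
replace (x^2) with (exp (ln x) * exp (ln x)) by (rewrite exp_ln by lra; ring).
rewrite <- !exp_plus. f_equal. ring.
Qed.

Lemma Gd_sign p x : 0 < p -> 0 < x -> 0 < 1 - 2 * x^2 ->
  Gd p x = 2 * p * exp (p * ln x) / x * (1 - 2 * psi p x).
Proof. intros hp h1 h2. pose proof (psi_id p x h1 h2) as E.
unfold Gd.
assert (exp (p * ln (1 - 2 * x ^ 2)) = psi p x * exp (p * ln x) * (1 - 2 * x^2) / x^2) as E2.
{ rewrite E. field. lra. }
rewrite E2. field. split; lra.
Qed.

Lemma Gd_nonneg p x : 0 < p -> 0 < x -> 0 < 1 - 2 * x^2 -> psi p x <= 1/2 -> 0 <= Gd p x.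
Proof. intros hp h1 h2 h3. rewrite Gd_sign by auto.
apply Rmult_le_pos; [|lra].
unfold Rdiv. apply Rmult_le_pos; [|left; apply Rinv_0_lt_compat; lra].
pose proof (exp_pos (p * ln x)). nra.
Qed.

Lemma Gd_nonpos p x : 0 < p -> 0 < x -> 0 < 1 - 2 * x^2 -> 1/2 <= psi p x -> Gd p x <= 0.
Proof. intros hp h1 h2 h3. rewrite Gd_sign by auto.
assert (0 <= 2 * p * exp (p * ln x) / x).
{ unfold Rdiv. apply Rmult_le_pos; [|left; apply Rinv_0_lt_compat; lra].
  pose proof (exp_pos (p * ln x)). nra. }
nra.
Qed.

Lemma psid_sign p x : 0 < x -> 0 < 1 - 2 * x^2 ->
  psid p x = psi p x * (((2 - p) - 2 * p * x^2) / (x * (1 - 2 * x^2))).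
Proof. intros h1 h2. unfold psid. f_equal. field. split; lra. Qed.

Lemma psid_nonneg p x : 0 < x -> 0 < 1 - 2 * x^2 -> 2 * p * x^2 <= 2 - p -> 0 <= psid p x.
Proof. intros h1 h2 h3. rewrite psid_sign by auto.
apply Rmult_le_pos; [left; apply exp_pos|].
unfold Rdiv. apply Rmult_le_pos; [lra|left; apply Rinv_0_lt_compat; nra].
Qed.

Lemma psid_nonpos p x : 0 < x -> 0 < 1 - 2 * x^2 -> 2 - p <= 2 * p * x^2 -> psid p x <= 0.
Proof. intros h1 h2 h3. rewrite psid_sign by auto.
assert (0 < / (x * (1 - 2 * x^2))) by (apply Rinv_0_lt_compat; nra).
pose proof (exp_pos ((2 - p) * ln x + (p - 1) * ln (1 - 2 * x^2))).
unfold psi, Rdiv.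
assert (((2 - p) - 2 * p * x ^ 2) * / (x * (1 - 2 * x ^ 2)) <= 0) by nra.
nra.
Qed.

Definition G0 p s := 2 * rpow s p + rpow (1 - 2 * s^2) p.

Lemma rpow_pos x p : 0 < x -> rpow x p = exp (p * ln x).
Proof. intros h. unfold rpow. destruct (Rle_dec x 0); [lra|reflexivity]. Qed.

Lemma G0_eq p y : 0 < y -> 0 < 1 - 2 * y^2 -> G0 p y = Gx p y.
Proof. intros h1 h2. unfold G0, Gx. rewrite !rpow_pos by lra. reflexivity. Qed.

Lemma loc_G0 p x : 0 < x <= 1/2 -> locally x (fun y => Gx p y = G0 p y).
Proof. intros hx.
assert (hr : 0 < Rmin (x/2) (1/8)) by (apply Rmin_pos; lra).
exists (mkposreal _ hr). intros y hy. change (Rabs (y - x) < Rmin (x/2) (1/8)) in hy.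
pose proof (Rmin_l (x/2) (1/8)). pose proof (Rmin_r (x/2) (1/8)).
apply Rabs_def2 in hy.
symmetry. apply G0_eq; nra.
Qed.

Lemma dG0 p x : 0 < x < 1/2 -> is_derive (G0 p) x (Gd p x).
Proof. intros hx. apply (is_derive_ext_loc (Gx p)).
- apply loc_G0; lra.
- apply dG; nra.
Qed.

Lemma cont_pos p x : 0 < x <= 1/2 -> continuity_pt (G0 p) x.
Proof. intros hx. apply continuity_pt_filterlim.
apply (continuous_ext_loc (G0 p) (Gx p) x).
- apply loc_G0; lra.
- apply (@ex_derive_continuous R_AbsRing R_NormedModule). eexists. apply dG; nra.
Qed.

Lemma cont_psi p x : 0 < x <= 1/2 -> continuity_pt (psi p) x.
Proof. intros hx. apply continuity_pt_filterlim.
apply (@ex_derive_continuous R_AbsRing R_NormedModule). eexists. apply dpsi; nra.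
Qed.

Lemma rpow0 p : rpow 0 p = 0.
Proof. unfold rpow. destruct (Rle_dec 0 0); [reflexivity|lra]. Qed.

Lemma cont_0 p : 1 <= p -> continuity_pt (G0 p) 0.
Proof. intros hp.
change (continuity_pt (plus_fct (mult_real_fct 2 (fun s => rpow s p))
   (fun s => rpow (1 - 2 * s^2) p)) 0).
apply continuity_pt_plus.
- apply continuity_pt_scal.
  unfold continuity_pt, continue_in, limit1_in, limit_in. intros eps heps.
  exists (Rmin eps 1). split; [apply Rmin_pos; lra|].
  intros y [_ hy]. simpl in *. unfold R_dist in *. rewrite rpow0.
  pose proof (Rmin_l eps 1). pose proof (Rmin_r eps 1).
  rewrite Rminus_0_r in *.
  unfold rpow. destruct (Rle_dec y 0).
  + rewrite ?Rminus_0_r, Rabs_R0. lra.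
  + apply Rabs_def2 in hy. idtac.
    unfold Rpower. rewrite Rabs_pos_eq by (left; apply exp_pos).
    assert (ln y < 0) by (rewrite <- ln_1; apply ln_increasing; lra).
    replace (p * ln y) with ((p - 1) * ln y + ln y) by ring.
    rewrite exp_plus, exp_ln by lra.
    assert (exp ((p - 1) * ln y) <= 1).
    { rewrite <- exp_0 at 2. destruct (Rle_lt_or_eq_dec 1 p hp) as [h|<-].
      - left. apply exp_increasing. nra.
      - replace ((1-1) * ln y) with 0 by ring. lra. }
    nra.
- apply continuity_pt_filterlim.
  apply (continuous_ext_loc (fun s => rpow (1 - 2 * s^2) p) (fun s => exp (p * ln (1 - 2 * s^2))) 0).
  + assert (hr : 0 < 1/2) by lra. exists (mkposreal _ hr). intros y hy.
    change (Rabs (y - 0) < 1/2) in hy. rewrite Rminus_0_r in hy.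
    apply Rabs_def2 in hy. rewrite rpow_pos by nra. reflexivity.
  + apply (@ex_derive_continuous R_AbsRing R_NormedModule). auto_derive. repeat split; lra.
Qed.

Lemma psi_half p : psi p (1/2) = 1/2.
Proof. unfold psi. replace (1 - 2 * (1/2)^2) with (1/2) by field.
replace ((2 - p) * ln (1/2) + (p - 1) * ln (1/2)) with (ln (1/2)) by ring.
apply exp_ln; lra.
Qed.

Definition kk p := (2 - p) / (2 * p).

Lemma kk_facts p : 4/3 <= p < 2 ->
  0 < sqrt (kk p) <= 1/2 /\ sqrt (kk p) * sqrt (kk p) = kk p /\ 2 * p * kk p = 2 - p.
Proof. intros hp.
assert (0 < kk p) by (unfold kk; apply Rdiv_lt_0_compat; lra).
assert (kk p <= 1/4) by (unfold kk; apply Rmult_le_reg_r with (2*p); [lra|];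
  unfold Rdiv; rewrite Rmult_assoc, Rinv_l by lra; lra).
pose proof (sqrt_lt_R0 _ H). pose proof (sqrt_sqrt (kk p) (Rlt_le _ _ H)).
split; [split; [lra|]|split; [lra|]].
- destruct (Rle_or_lt (sqrt (kk p)) (1/2)); [lra|nra].
- unfold kk. field. lra.
Qed.

Lemma psiA p x : 4/3 <= p < 2 -> sqrt (kk p) <= x <= 1/2 -> 1/2 <= psi p x.
Proof. intros hp hx. destruct (kk_facts p hp) as [[h1 h2] [h3 h4]].
rewrite <- psi_half at 1.
apply (mono_ge (psi p) (psid p)); [lra| | |].
- intros y hy. apply dpsi; nra.
- intros y hy. apply cont_psi; lra.
- intros y hy. apply psid_nonpos; nra.
Qed.

Lemma psiInc p a b : 4/3 <= p < 2 -> 0 < a <= b -> b <= sqrt (kk p) -> psi p a <= psi p b.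
Proof. intros hp hab hb. destruct (kk_facts p hp) as [[h1 h2] [h3 h4]].
apply (mono_le (psi p) (psid p)); [lra| | |].
- intros y hy. apply dpsi; nra.
- intros y hy. apply cont_psi; lra.
- intros y hy. apply psid_nonneg; nra.
Qed.

Lemma Gdec p s : 4/3 <= p < 2 -> 0 < s <= 1/2 ->
  (forall x, s < x < 1/2 -> 1/2 <= psi p x) -> G0 p (1/2) <= G0 p s.
Proof. intros hp hs H.
apply (mono_ge (G0 p) (Gd p)); [lra| | |].
- intros y hy. apply dG0; lra.
- intros y hy. apply cont_pos; lra.
- intros y hy. apply Gd_nonpos; try nra. apply H; lra.
Qed.

Lemma Ginc p s : 4/3 <= p < 2 -> 0 < s <= 1/2 ->
  (forall x, 0 < x < s -> psi p x <= 1/2) -> G0 p 0 <= G0 p s.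
Proof. intros hp hs H.
apply (mono_le (G0 p) (Gd p)); [lra| | |].
- intros y hy. apply dG0; lra.
- intros y hy. destruct (Req_dec y 0) as [->|].
  + apply cont_0; lra.
  + apply cont_pos; lra.
- intros y hy. apply Gd_nonneg; try nra. apply H; lra.
Qed.

Lemma G00 p : G0 p 0 = 1.
Proof. unfold G0. rewrite rpow0. replace (1 - 2 * 0^2) with 1 by ring.
rewrite rpow_pos by lra. rewrite ln_1. replace (p * 0) with 0 by ring. rewrite exp_0; ring. Qed.

Lemma G_ge1 p s : 4/3 <= p < 2 -> 1 <= G0 p (1/2) -> 0 <= s <= 1/2 -> 1 <= G0 p s.
Proof. intros hp hh hs. destruct (kk_facts p hp) as [[h1 h2] [h3 h4]].
destruct (Req_dec s 0) as [->|hs0]; [rewrite G00; lra|].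
destruct (Rle_or_lt (sqrt (kk p)) s).
- assert (G0 p (1/2) <= G0 p s); [|lra].
  apply Gdec; [lra|lra|]. intros x hx. apply psiA; lra.
- destruct (Rle_or_lt (psi p s) (1/2)).
  + apply Rle_trans with (G0 p 0); [rewrite G00; lra|]. apply Ginc; [lra|lra|]. intros x hx.
    apply Rle_trans with (psi p s); [apply psiInc; lra|lra].
  + assert (G0 p (1/2) <= G0 p s); [|lra].
    apply Gdec; [lra|lra|]. intros x hx.
    destruct (Rle_or_lt x (sqrt (kk p))).
    * apply Rle_trans with (psi p s); [lra|apply psiInc; lra].
    * apply psiA; lra.
Qed.

Lemma G_half p : p * ln 2 <= ln 3 -> 1 <= G0 p (1/2).
Proof. intros h. unfold G0. replace (1 - 2 * (1/2)^2) with (1/2) by field.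
rewrite rpow_pos by lra. replace (1/2) with (/2) by field.
rewrite ln_Rinv by lra.
assert (exp (- ln 3) <= exp (p * - ln 2)).
{ destruct (Req_dec (p * ln 2) (ln 3)) as [e|].
  - right. f_equal. lra.
  - left. apply exp_increasing. lra. }
rewrite exp_Ropp, exp_ln in H by lra. lra.
Qed.

Theorem lemma2p5 (p : R) (hp1 : 4 / 3 <= p) (hp2 : p <= ln 3 / ln 2) :
  (forall a : R, 0 <= a <= PI / 3 ->
     Rmin (Lfun p 0) (Lfun p (PI / 3)) <= Lfun p a) /\
  (forall a : R, 0 <= a <= PI / 3 -> 2 <= Lfun p a).
Proof.
assert (hl2 : 0 < ln 2) by (rewrite <- ln_1; apply ln_increasing; lra).
assert (hl4 : ln 3 < 2 * ln 2).
{ replace (2 * ln 2) with (ln (2 * 2)) by (rewrite ln_mult by lra; ring).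
  apply ln_increasing; lra. }
assert (hpl : p * ln 2 <= ln 3).
{ apply Rmult_le_compat_r with (r := ln 2) in hp2; [|lra].
  unfold Rdiv in hp2. rewrite Rmult_assoc, Rinv_l in hp2 by lra. lra. }
assert (hp3 : p < 2).
{ destruct (Rlt_or_le p 2); [auto|]. nra. }
assert (key : forall a, 0 <= a <= PI / 3 -> 2 <= Lfun p a).
{ intros a ha. pose proof PI_RGT_0.
  set (s := sin (a/2)).
  assert (hs0 : 0 <= s) by (apply sin_ge_0; lra).
  assert (hs1 : s <= 1/2).
  { rewrite <- sin_PI6. apply sin_incr_1; lra. }
  assert (hc : cos a = 1 - 2 * s^2).
  { replace a with (2 * (a/2)) at 1 by field. rewrite cos_2a_sin. unfold s. ring. }
  unfold Lfun. rewrite hc. fold s.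
  pose proof (G_ge1 p s (conj hp1 hp3) (G_half p hpl) (conj hs0 hs1)).
  unfold G0 in H0. lra. }
split; [|exact key].
intros a ha. apply Rle_trans with (Lfun p 0); [apply Rmin_l|].
replace (Lfun p 0) with 2; [apply key; auto|].
unfold Lfun. replace (0/2) with 0 by field. rewrite sin_0, cos_0, rpow0.
rewrite rpow_pos by lra. rewrite ln_1. replace (p * 0) with 0 by ring. rewrite exp_0. ring.
Qed.
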